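(* Let $G$ be a finite simple graph on $\{x_1,\dots,x_n\}$, $S=\mathbb{K}[x_1,\dots,x_n]$, and let $x_ix_j$ be an edge of $G$. Set $L:=N_G(x_i)\cap N_G(x_j)$ and let $G'$ be the graph with $V(G')=V(G)\setminus L$ and edge set $$E(G')=E(G\setminus L)\cup\{x_px_q\mid x_p\in N_{G\setminus L}(x_i),\ x_q\in N_{G\setminus L}(x_j)\}.$$ Then, as ideals of $S$, $$(I(G):x_i)\cap (I(G):x_j)=I(G')+(L),$$ where $(L)$ is the ideal generated by the variables in $L$.
   Context: Vertices of $G$ are identified with variables of $S$; the edge ideal is $I(G)=(x_px_q : x_px_q\in E(G))\subseteq S$, and for a graph on a subset of the vertices its edge ideal is likewise taken in $S$. $N_G(x)$ denotes the neighbour set of $x$. For $U\subseteq V(G)$, $G\setminus U$ has vertex set $V(G)\setminus U$ and edge set $\{e\in E(G): e\cap U=\emptyset\}$. $(I:u)$ denotes the colon ideal $\{f\in S: fu\in I\}$. *)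

(* Defs.v *)
From HB Require Import structures.
From mathcomp Require Import all_boot all_algebra.
From mathcomp Require Import mpoly.
Set Implicit Arguments. Unset Strict Implicit. Unset Printing Implicit Defensive.
Import GRing.Theory.
Local Open Scope ring_scope.

(* Polynomial ring S = K[x_0,...,x_{n-1}] is {mpoly K[n]}; vertex p : 'I_n is
   identified with the variable 'X_p.  Ideals are represented as predicates
   (Prop-valued sets) on S. *)

Section Defs.
Variables (K : fieldType) (n : nat).
Notation S := {mpoly K[n]}.

Definition ideal_gen (P : S -> Prop) (f : S) : Prop :=
  exists s : seq (S * S),
    (forall c, c \in s -> P c.2) /\ f = \sum_(c <- s) c.1 * c.2.

Definition edge_ideal (G : rel 'I_n) : S -> Prop :=
  ideal_gen (fun g => exists p q, G p q /\ g = 'X_p * 'X_q).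

Definition var_ideal (U : pred 'I_n) : S -> Prop :=
  ideal_gen (fun g => exists p, U p /\ g = 'X_p).

Definition ideal_sum (I J : S -> Prop) : S -> Prop :=
  ideal_gen (fun g => I g \/ J g).

Definition colon (I : S -> Prop) (u : S) : S -> Prop := fun f => I (f * u).

Definition ideal_cap (I J : S -> Prop) : S -> Prop := fun f => I f /\ J f.

Definition ideal_eq (I J : S -> Prop) : Prop := forall f, I f <-> J f.

Definition simple_graph (G : rel 'I_n) : Prop :=
  ssrbool.symmetric G /\ ssrbool.irreflexive G.

Definition nbhd (G : rel 'I_n) (x : 'I_n) : pred 'I_n := fun y => G x y.

Definition del_vertices (G : rel 'I_n) (U : pred 'I_n) : rel 'I_n :=
  fun p q => [&& G p q, ~~ U p & ~~ U q].

Definition common_nbhd (G : rel 'I_n) (i j : 'I_n) : pred 'I_n :=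
  fun p => nbhd G i p && nbhd G j p.

Definition Gprime (G : rel 'I_n) (i j : 'I_n) : rel 'I_n :=
  let L := common_nbhd G i j in
  let GL := del_vertices G L in
  fun p q => [|| GL p q,
                (nbhd GL i p && nbhd GL j q) |
                (nbhd GL i q && nbhd GL j p)].

End Defs.

Arguments edge_ideal K {n} G.
Arguments var_ideal K {n} U.

(* Main.v *)
Require Import Defs.
From HB Require Import structures.
From mathcomp Require Import all_boot all_algebra.
From mathcomp Require Import mpoly.
From mathcomp Require Import zify ring.
Set Implicit Arguments. Unset Strict Implicit. Unset Printing Implicit Defensive.
Import GRing.Theory.
Local Open Scope ring_scope.

Section Aux.
Variables (K : fieldType) (n : nat).
Notation S := {mpoly K[n]}.

Lemma ig_0 (P : S -> Prop) : ideal_gen P 0.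
Proof. by exists [::]; split => //; rewrite big_nil. Qed.

Lemma ig_gen (P : S -> Prop) g : P g -> ideal_gen P g.
Proof.
move=> Pg; exists [:: (1, g)]; split.
  by move=> c; rewrite inE => /eqP ->.
by rewrite big_seq1 mul1r.
Qed.

Lemma ig_add (P : S -> Prop) f g : ideal_gen P f -> ideal_gen P g -> ideal_gen P (f + g).
Proof.
move=> [s [Hs ->]] [t [Ht ->]]; exists (s ++ t); split; last by rewrite big_cat.
by move=> c; rewrite mem_cat => /orP [/Hs|/Ht].
Qed.

Lemma ig_mul (P : S -> Prop) r f : ideal_gen P f -> ideal_gen P (r * f).
Proof.
move=> [s [Hs ->]]; exists [seq (r * c.1, c.2) | c <- s]; split.
  by move=> c /mapP [d /Hs Hd ->].
rewrite big_map mulr_sumr; apply: eq_bigr => c _; by rewrite mulrA.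
Qed.

Lemma ig_sub (P Q : S -> Prop) :
  Q 0 -> (forall f g, Q f -> Q g -> Q (f + g)) -> (forall r f, Q f -> Q (r * f)) ->
  (forall g, P g -> Q g) -> forall f, ideal_gen P f -> Q f.
Proof.
move=> Q0 QD QM PQ f [s [Hs ->]]; elim: s Hs => [|c s IH] Hs.
  by rewrite big_nil.
rewrite big_cons; apply: QD; last by apply: IH => d Hd; apply: Hs; rewrite inE Hd orbT.
by apply: QM; apply: PQ; apply: Hs; rewrite inE eqxx.
Qed.

Lemma ig_mono (P : S -> Prop) (Q : 'X_{1..n} -> Prop) h m :
  (forall g, P g -> exists e, Q e /\ g = 'X_[e]) -> ideal_gen P h ->
  m \in msupp h -> exists e, Q e /\ (e <= m)%MM.
Proof.
move=> PQ [s [Hs ->]]; elim: s Hs => [|c s IH] Hs.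
  by rewrite big_nil msupp0.
rewrite big_cons mcoeff_msupp mcoeffD.
case: (boolP (m \in msupp (c.1 * c.2))) => [H|].
  have [e [Qe ce]] := PQ _ (Hs c (mem_head _ _)).
  exists e; split => //; move: H; rewrite ce (perm_mem (msuppMX _ _)).
  by case/mapP => m' _ ->; apply: lem_addr.
rewrite -mcoeff_eq0 => /eqP ->; rewrite add0r -mcoeff_msupp.
by apply: IH => d Hd; apply: Hs; rewrite inE Hd orbT.
Qed.


Lemma memI (G : rel 'I_n) p q (r : S) : G p q -> edge_ideal K G (r * ('X_p * 'X_q)).
Proof. by move=> H; apply: ig_mul; apply: ig_gen; exists p, q. Qed.

Lemma step (G : rel 'I_n) i p q (m : 'X_{1..n}) :
  simple_graph G -> G p q -> (U_(p) + U_(q) <= m + U_(i))%MM ->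
  (exists q', G i q' /\ (U_(q') <= m)%MM) \/
  (exists p' q', G p' q' /\ (U_(p') + U_(q') <= m)%MM).
Proof.
move=> [sym irr] Gpq /mnm_lepP H.
have pq : p != q by apply: contraTneq Gpq => ->; rewrite irr.
case: (eqVneq p i) => [epi|npi].
  left; exists q; split; first by rewrite -epi.
  apply/mnm_lepP => k; move: (H k); rewrite !mnmDE epi; lia.
case: (eqVneq q i) => [eqi|nqi].
  left; exists p; split; first by rewrite -eqi sym.
  apply/mnm_lepP => k; move: (H k); rewrite !mnmDE eqi; lia.
right; exists p, q; split => //; apply/mnm_lepP => k; move: (H k).
rewrite !mnmDE !mnm1E; case: (eqVneq i k) => [<-|_].
  by rewrite (negbTE npi) (negbTE nqi).
by rewrite addn0.
Qed.


Definition genJ (G : rel 'I_n) i j (e : 'X_{1..n}) : Prop :=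
  (exists p q, Gprime G i j p q /\ e = (U_(p) + U_(q))%MM) \/
  (exists l, common_nbhd G i j l /\ e = U_(l)%MM).

Lemma edge_case (G : rel 'I_n) i j p q (m : 'X_{1..n}) :
  G p q -> (U_(p) + U_(q) <= m)%MM -> exists e, genJ G i j e /\ (e <= m)%MM.
Proof.
move=> Gpq le.
case Lp: (common_nbhd G i j p).
  exists U_(p)%MM; split; first by right; exists p.
  exact: lepm_trans (lem_addr _ _) le.
case Lq: (common_nbhd G i j q).
  exists U_(q)%MM; split; first by right; exists q.
  exact: lepm_trans (lem_addl _ _) le.
exists (U_(p) + U_(q))%MM; split => //; left; exists p, q; split => //.
by rewrite /Gprime /del_vertices Gpq Lp Lq.
Qed.

Lemma combine (G : rel 'I_n) i j (m : 'X_{1..n}) :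
  simple_graph G ->
  (exists q', G i q' /\ (U_(q') <= m)%MM) \/
  (exists p' q', G p' q' /\ (U_(p') + U_(q') <= m)%MM) ->
  (exists q', G j q' /\ (U_(q') <= m)%MM) \/
  (exists p' q', G p' q' /\ (U_(p') + U_(q') <= m)%MM) ->
  exists e, genJ G i j e /\ (e <= m)%MM.
Proof.
move=> [sym irr] [[q [Giq Hq]]|[p [q [G1 H1]]]]; last by move=> _; exact: edge_case G1 H1.
move=> [[q' [Gjq Hq']]|[p [q'' [G1 H1]]]]; last exact: edge_case G1 H1.
case Lq: (common_nbhd G i j q).
  by exists U_(q)%MM; split => //; right; exists q.
case Lq': (common_nbhd G i j q').
  by exists U_(q')%MM; split => //; right; exists q'.
have nq : q != q'.
  by apply/eqP => E; move: Lq; rewrite /common_nbhd /nbhd Giq E Gjq.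
exists (U_(q) + U_(q'))%MM; split.
  left; exists q, q'; split => //.
  have Li : common_nbhd G i j i = false by rewrite /common_nbhd /nbhd irr.
  have Lj : common_nbhd G i j j = false by rewrite /common_nbhd /nbhd irr andbF.
  by rewrite /Gprime /nbhd /del_vertices Giq Gjq Li Lj Lq Lq' /= orbT.
apply/mnm_lepP => k; move/mnm_lepP: Hq => /(_ k); move/mnm_lepP: Hq' => /(_ k).
rewrite mnmDE !mnm1E; case: (eqVneq q k) => [<-|_]; last by rewrite add0n.
by rewrite eq_sym (negbTE nq) addn0.
Qed.

End Aux.

Theorem lemma3p2 (K : fieldType) (n : nat) (G : rel 'I_n) (i j : 'I_n) :
  simple_graph G -> G i j ->
  ideal_eq
    (ideal_cap (colon (edge_ideal K G) 'X_i) (colon (edge_ideal K G) 'X_j))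
    (ideal_sum (edge_ideal K (Gprime G i j))
               (var_ideal K (common_nbhd G i j))).
Proof.
move=> SG Gij f; split.
  move=> [Hi Hj].
  have genP : forall g : {mpoly K[n]}, (exists p q, G p q /\ g = 'X_p * 'X_q) ->
      exists e, (exists p q, G p q /\ e = (U_(p) + U_(q))%MM) /\ g = 'X_[e].
    move=> g [p [q [Gpq ->]]]; exists (U_(p) + U_(q))%MM; split; first by exists p, q.
    by rewrite mpolyXD.
  rewrite (mpolyE f) big_seq; apply: (big_ind (ideal_gen _)).
  - exact: ig_0.
  - exact: ig_add.
  move=> m Hm.
  have Hm' : forall k : 'I_n, (m + U_(k))%MM \in msupp (f * 'X_k).
    by move=> k; rewrite mcoeff_msupp addmC mcoeffMX -mcoeff_msupp.
  have [e1 [[p1 [q1 [G1 ->]]] le1]] := ig_mono genP Hi (Hm' i).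
  have [e2 [[p2 [q2 [G2 ->]]] le2]] := ig_mono genP Hj (Hm' j).
  have [e [Je lem]] := combine SG (step SG G1 le1) (step SG G2 le2).
  rewrite -mul_mpolyC -(submK lem) mpolyXD mulrA; apply: ig_mul; apply: ig_gen.
  case: Je => [[p [q [Gp ->]]]|[l [Ll ->]]].
    by left; apply: ig_gen; exists p, q; rewrite mpolyXD.
  by right; apply: ig_gen; exists l.
have [sym irr] := SG.
apply: ig_sub.
- by split; rewrite /colon mul0r; apply: ig_0.
- by move=> a b [Ha1 Ha2] [Hb1 Hb2]; split; rewrite /colon mulrDl; apply: ig_add.
- by move=> r a [H1 H2]; split; rewrite /colon -mulrA; apply: ig_mul.
move=> g [Hg|Hg].
  move: Hg; apply: ig_sub.
  - by split; rewrite /colon mul0r; apply: ig_0.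
  - by move=> a b [Ha1 Ha2] [Hb1 Hb2]; split; rewrite /colon mulrDl; apply: ig_add.
  - by move=> r a [H1 H2]; split; rewrite /colon -mulrA; apply: ig_mul.
  move=> h [p [q [Gpq ->]]]; rewrite /Gprime /nbhd /del_vertices in Gpq.
  case/or3P: Gpq => [/and3P [G1 _ _]|/andP [/and3P [G1 _ _] /and3P [G2 _ _]]|/andP [/and3P [G1 _ _] /and3P [G2 _ _]]].
  - split; rewrite /colon.
      have -> : 'X_p * 'X_q * 'X_i = 'X_i * ('X_p * 'X_q) :> {mpoly K[n]} by ring.
    by apply: memI.
    have -> : 'X_p * 'X_q * 'X_j = 'X_j * ('X_p * 'X_q) :> {mpoly K[n]} by ring.
    by apply: memI.
  - split; rewrite /colon.
      have -> : 'X_p * 'X_q * 'X_i = 'X_q * ('X_i * 'X_p) :> {mpoly K[n]} by ring.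
    by apply: memI.
    have -> : 'X_p * 'X_q * 'X_j = 'X_p * ('X_j * 'X_q) :> {mpoly K[n]} by ring.
    by apply: memI.
  - split; rewrite /colon.
      have -> : 'X_p * 'X_q * 'X_i = 'X_p * ('X_i * 'X_q) :> {mpoly K[n]} by ring.
    by apply: memI.
    have -> : 'X_p * 'X_q * 'X_j = 'X_q * ('X_j * 'X_p) :> {mpoly K[n]} by ring.
    by apply: memI.
move: Hg; apply: ig_sub.
- by split; rewrite /colon mul0r; apply: ig_0.
- by move=> a b [Ha1 Ha2] [Hb1 Hb2]; split; rewrite /colon mulrDl; apply: ig_add.
- by move=> r a [H1 H2]; split; rewrite /colon -mulrA; apply: ig_mul.
move=> h [l [/andP [G1 G2] ->]]; split; rewrite /colon.
  have -> : 'X_l * 'X_i = 1 * ('X_i * 'X_l) :> {mpoly K[n]} by ring.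
  by apply: memI.
have -> : 'X_l * 'X_j = 1 * ('X_j * 'X_l) :> {mpoly K[n]} by ring.
by apply: memI.
Qed.
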